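(* Let $Q$ be a binary symmetric $m\times m$ matrix of rank $r$ over $\mathbb{F}_2$, let $b\in\mathbb{F}_2^m$, and let $$S=\sum_{x\in\mathbb{F}_2^m} i^{\,xQx^\top+2bx^\top}.$$ Then there exists $z_1\in\mathbb{F}_2^m$ with $z_1Q=d_Q$ (over $\mathbb{F}_2$), and either $S=0$ or $$S^2=i^{\,z_1Qz_1^\top+2bz_1^\top}\,2^{2m-r}.$$
   Context: Here $i=\sqrt{-1}$, $d_Q$ denotes the main diagonal of $Q$ as a binary vector, and exponents of $i$ are computed in the integers modulo 4, viewing binary entries as the integers 0 and 1. *)

(* Defs.v *)
From HB Require Import structures.
From mathcomp Require Import all_boot all_order all_algebra.
From mathcomp Require Import algC.
Set Implicit Arguments. Unset Strict Implicit. Unset Printing Implicit Defensive.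
Import Order.TTheory GRing.Theory Num.Theory.
Local Open Scope ring_scope.

Definition bin (x : 'F_2) : nat := nat_of_ord x.

Definition qform (m : nat) (Q : 'M['F_2]_m) (x : 'rV['F_2]_m) : nat :=
  (\sum_(j < m) \sum_(k < m) bin (x ord0 j) * bin (Q j k) * bin (x ord0 k))%N.

Definition lform (m : nat) (b x : 'rV['F_2]_m) : nat :=
  (\sum_(j < m) bin (b ord0 j) * bin (x ord0 j))%N.

(* i ^ (x Q x^T + 2 b x^T); since i^4 = 1, a nat exponent equals the exponent mod 4. *)
Definition iexp (m : nat) (Q : 'M['F_2]_m) (b x : 'rV['F_2]_m) : algC :=
  'i ^+ (qform Q x + 2 * lform b x)%N.

Definition diagv (m : nat) (Q : 'M['F_2]_m) : 'rV['F_2]_m := \row_j Q j j.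

Definition Ssum (m : nat) (Q : 'M['F_2]_m) (b : 'rV['F_2]_m) : algC :=
  \sum_(x : 'rV['F_2]_m) iexp Q b x.

(* Main.v *)
Require Import Defs.
From HB Require Import structures.
From mathcomp Require Import all_boot all_order all_algebra.
From mathcomp Require Import algC ring.
Import Order.TTheory GRing.Theory Num.Theory.
Local Open Scope ring_scope.

Lemma F2cases (a : 'F_2) : a = 0 \/ a = 1.
Proof. case: a => [[|[|n]]] H; [left|right|]; try exact/val_inj. by []. Qed.

Definition beta (a : 'F_2) : 'Z_4 := (bin a)%:R.

Lemma betaD (a c : 'F_2) : beta (a + c) = beta a + beta c - 2 * beta a * beta c.
Proof. by case: (F2cases a) => ->; case: (F2cases c) => ->; apply/val_inj. Qed.

Lemma betaM (a c : 'F_2) : beta (a * c) = beta a * beta c.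
Proof. by case: (F2cases a) => ->; case: (F2cases c) => ->; apply/val_inj. Qed.

Lemma four0 : 4 = 0 :> 'Z_4. Proof. by apply/val_inj. Qed.
Lemma twoD (a c : 'F_2) : 2 * beta (a + c) = 2 * beta a + 2 * beta c.
Proof. by case: (F2cases a) => ->; case: (F2cases c) => ->; apply/val_inj. Qed.
Lemma aa (a : 'F_2) : a + a = 0.
Proof. by case: (F2cases a) => ->; apply/val_inj. Qed.

Lemma iexpmod n : 'i ^+ n = 'i ^+ (n %% 4) :> algC.
Proof. rewrite {1}(divn_eq n 4) exprD mulnC exprM. have ->: 'i ^+ 4 = 1 :> algC.
  by rewrite (_ : 4 = 2 * 2)%N // exprM sqrCi -signr_odd expr0 /=.
by rewrite expr1n mul1r. Qed.

Definition I4 (z : 'Z_4) : algC := 'i ^+ (nat_of_ord z).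

Lemma I4D z w : I4 (z + w) = I4 z * I4 w.
Proof. by rewrite /I4 -exprD [in RHS]iexpmod. Qed.

Lemma I4nat n : I4 (n%:R) = 'i ^+ n.
Proof. by rewrite /I4 val_Zp_nat // -iexpmod. Qed.

Lemma I40 : I4 0 = 1. Proof. by []. Qed.

Lemma pointid (A1 A2 C1 C2 QQ : 'Z_4) :
  (A1 + C1 - 2 * A1 * C1) * QQ * (A2 + C2 - 2 * A2 * C2) =
  A1 * QQ * A2 + C1 * QQ * C2 + (A1 * QQ * C2 + C1 * QQ * A2) -
    2 * (A1 * C1 * QQ * (A2 + C2) + A2 * C2 * QQ * (A1 + C1)).
Proof.
transitivity (A1 * QQ * A2 + C1 * QQ * C2 + (A1 * QQ * C2 + C1 * QQ * A2) -
    2 * (A1 * C1 * QQ * (A2 + C2) + A2 * C2 * QQ * (A1 + C1))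
    + 4 * (A1 * C1 * QQ * A2 * C2)); first by ring.
by rewrite four0 mul0r addr0.
Qed.

Lemma m3 (A B C : 'Z_4) : C * B * A = A * B * C.
Proof. by ring. Qed.

Definition sg (a : 'F_2) : algC := I4 (2 * beta a).

Lemma sgD a c : sg (a + c) = sg a * sg c.
Proof. by rewrite /sg twoD I4D. Qed.

Lemma sg0 : sg 0 = 1. Proof. by []. Qed.
Lemma sg1 : sg 1 = -1. Proof. by rewrite /sg /I4 /= sqrCi. Qed.

Lemma ent_add (A B : 'M['F_2]_1) : (A + B) ord0 ord0 = A ord0 ord0 + B ord0 ord0.
Proof. by rewrite mxE. Qed.

Lemma N1ne1 : (-1 : algC) != 1.
Proof.
apply/negP => /eqP h.
have h2 : (1 + 1 : algC) = 0 by rewrite -{1}h addNr.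
have : (2%:R : algC) == 0 by rewrite mulr2n h2.
by rewrite pnatr_eq0.
Qed.

Lemma charsum m (K : pred 'rV['F_2]_m) (chi : 'rV['F_2]_m -> algC) :
  (forall x y, K x -> K y -> K (x + y)) ->
  (forall x y, K x -> K y -> chi (x + y) = chi x * chi y) ->
  (\sum_(x | K x) chi x = 0) \/ (forall x, K x -> chi x = 1).
Proof.
move=> KD chiM.
case: (boolP [exists x, K x && (chi x != 1)]) => [/existsP [x0 /andP [Kx0 hx0]] | /existsPn H]; [left | right]; last first.
  by move=> x Kx; have := H x; rewrite Kx /= negbK => /eqP.
have xx : forall x : 'rV['F_2]_m, x0 + (x0 + x) = x.
  move=> x; apply/matrixP => i j; rewrite !mxE addrA aa add0r //.
have h : \sum_(x | K x) chi x = chi x0 * \sum_(x | K x) chi x.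
  rewrite mulr_sumr (reindex_inj (addrI x0)) /=.
  apply: eq_big => x.
    apply/idP/idP => [Kx | Kx]; last exact: KD.
    by rewrite -(xx x); apply: KD.
  move=> Kx; apply: chiM => //.
  by rewrite -(xx x); apply: KD.
have : (1 - chi x0) * \sum_(x | K x) chi x = 0.
  by rewrite mulrBl mul1r -h subrr.
move/eqP; rewrite mulf_eq0 subr_eq0 eq_sym (negbTE hx0) /= => /eqP //.
Qed.

Lemma fullsum m (w : 'rV['F_2]_m) :
  \sum_(x : 'rV['F_2]_m) sg ((x *m w^T) ord0 ord0) = if w == 0 then (2 ^ m)%:R else 0.
Proof.
case: eqP => [-> | /eqP nz].
  under eq_bigr do rewrite trmx0 mulmx0 mxE sg0.
  by rewrite sumr_const card_mx card_Fp // mul1n.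
case: (pickP (fun j => w ord0 j != 0)) => [j hj | h]; last first.
  case/eqP: nz; apply/matrixP => i k; rewrite [i]ord1 mxE.
  by have := h k => /negbFE/eqP.
have := @charsum m xpredT (fun x => sg ((x *m w^T) ord0 ord0)) (fun _ _ _ _ => isT).
case.
- move=> x y _ _; by rewrite mulmxDl ent_add sgD.
- by [].
- move=> /(_ (delta_mx 0 j) isT); rewrite -rowE !mxE.
  have -> : w ord0 j = 1 by case: (F2cases (w ord0 j)) hj => ->.
  by rewrite sg1 => /eqP; rewrite (negbTE N1ne1).
Qed.

Lemma card_ker m (Q : 'M['F_2]_m) :
  #|[pred k : 'rV['F_2]_m | k *m Q == 0]| = (2 ^ (m - \rank Q))%N.
Proof.
pose A := row_base (kermx Q).
have -> : #|[pred k : 'rV['F_2]_m | k *m Q == 0]| = #|codom (fun z : 'rV['F_2]_(\rank (kermx Q)) => z *m A)|.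
  apply: eq_card => k; rewrite !inE -sub_kermx -(eq_row_base (kermx Q)).
  apply/submxP/codomP => [[z ->] | [z ->]]; by exists z.
rewrite card_codom; last exact: row_free_inj (row_base_free _).
by rewrite card_mx card_Fp // mul1n mxrank_ker.
Qed.

Section Forms.
Variable m : nat.
Variable Q : 'M['F_2]_m.
Hypothesis Qs : Q^T = Q.

Lemma Qsym j k : Q j k = Q k j.
Proof. by rewrite -{1}Qs mxE. Qed.

Definition E (b x : 'rV['F_2]_m) : 'Z_4 := (qform Q x + 2 * lform b x)%:R.

Lemma iexpE b x : iexp Q b x = I4 (E b x).
Proof. by rewrite I4nat. Qed.

Definition qz (x : 'rV['F_2]_m) : 'Z_4 :=
  \sum_(j < m) \sum_(k < m) beta (x ord0 j) * beta (Q j k) * beta (x ord0 k).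
Definition bz (x y : 'rV['F_2]_m) : 'Z_4 :=
  \sum_(j < m) \sum_(k < m) beta (x ord0 j) * beta (Q j k) * beta (y ord0 k).
Definition lz (b x : 'rV['F_2]_m) : 'Z_4 :=
  \sum_(j < m) beta (b ord0 j) * beta (x ord0 j).

Lemma EE b x : E b x = bz x x + 2 * lz b x.
Proof.
rewrite /E natrD natrM /bz /lz /qform /lform !natr_sum; congr (_ + 2 * _).
  apply: eq_bigr => j _; rewrite natr_sum; apply: eq_bigr => k _; by rewrite !natrM.
by apply: eq_bigr => j _; rewrite natrM.
Qed.

Lemma bzC x y : bz x y = bz y x.
Proof.
rewrite /bz exchange_big; apply: eq_bigr => j _; apply: eq_bigr => k _.
by rewrite Qsym; ring.
Qed.

Lemma bzDD x y : bz (x + y) (x + y) = bz x x + bz y y + 2 * bz x y.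
Proof.
pose a j := beta (x ord0 j); pose c j := beta (y ord0 j); pose q j k := beta (Q j k).
pose g j k := a j * c j * q j k * (a k + c k).
transitivity (\sum_(j < m) \sum_(k < m) (a j * q j k * a k + c j * q j k * c k
   + (a j * q j k * c k + c j * q j k * a k) - 2 * (g j k + g k j))).
  apply: eq_bigr => j _; apply: eq_bigr => k _.
  rewrite !mxE !betaD /g /q Qsym -/(a j) -/(a k) -/(c j) -/(c k) /q.
  set qq := beta (Q k j).
  by rewrite pointid.
under eq_bigr => j _ do rewrite sumrB -mulr_sumr !big_split /=.
rewrite sumrB -mulr_sumr !big_split /=.
have -> : \sum_(i < m) \sum_(i0 < m) g i0 i = \sum_(i < m) \sum_(i0 < m) g i i0 by rewrite exchange_big.
have -> : \sum_(i < m) \sum_(i0 < m) (c i * q i i0 * a i0) = \sum_(i < m) \sum_(i0 < m) (a i * q i i0 * c i0).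
  rewrite /bz exchange_big; apply: eq_bigr => j _; apply: eq_bigr => k _.
  by rewrite m3 /q Qsym.
have h : forall (X Y B G : 'Z_4), X + Y + (B + B) - 2 * (G + G) = X + Y + 2 * B.
  move=> X Y B' G'; transitivity (X + Y + 2 * B' - 4 * G'); first by ring.
  by rewrite four0 mul0r subr0.
exact: h.
Qed.

Lemma lzD b x y : 2 * lz b (x + y) = 2 * lz b x + 2 * lz b y.
Proof.
rewrite /lz !mulr_sumr -big_split /=; apply: eq_bigr => j _.
rewrite !mxE !mulrA ![2 * beta (b _ _)]mulrC -!mulrA -mulrDr twoD.
by [].
Qed.

Lemma ED b x y : E b (x + y) = E b x + E b y + 2 * bz x y.
Proof.
rewrite !EE bzDD lzD.
by move: (bz x x) (bz y y) (bz x y) (lz b x) (lz b y) => A B C D F; ring.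
Qed.

Lemma phiS (I : Type) (r : seq I) (F : I -> 'F_2) :
  2 * beta (\sum_(i <- r) F i) = \sum_(i <- r) 2 * beta (F i).
Proof.
elim: r => [|i r IH]; first by rewrite !big_nil; apply/val_inj.
by rewrite !big_cons twoD IH.
Qed.

Lemma bzE x y : 2 * beta ((x *m Q *m y^T) ord0 ord0) = 2 * bz x y.
Proof.
rewrite mxE phiS /bz exchange_big mulr_sumr; apply: eq_bigr => k _.
rewrite mxE !mxE betaM mulrA phiS mulr_suml mulr_sumr.
apply: eq_bigr => j _; rewrite betaM.
by move: (beta (x _ _)) (beta (Q _ _)) (beta (y _ _)) => A B C; ring.
Qed.


Lemma xx0 (x : 'rV['F_2]_m) : x + x = 0.
Proof. by apply/matrixP => i j; rewrite !mxE aa. Qed.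

Lemma E0 b : E b 0 = 0.
Proof.
rewrite EE /bz /lz.
rewrite [X in X + _]big1 => [|j _]; last first.
  by rewrite big1 // => k _; rewrite !mxE; apply/val_inj.
by rewrite big1 ?mulr0 ?addr0 // => j _; rewrite !mxE mulr0.
Qed.

Lemma iexpD b x y : iexp Q b (x + y) = iexp Q b x * iexp Q b y * sg ((x *m Q *m y^T) ord0 ord0).
Proof. by rewrite !iexpE ED !I4D /sg bzE. Qed.

Lemma iexp2 b x : iexp Q b x * iexp Q b x = sg ((x *m Q *m x^T) ord0 ord0).
Proof.
have h := ED b x x; rewrite xx0 E0 in h.
rewrite !iexpE -I4D /sg bzE; congr I4.
have h4 : forall z : 'Z_4, - (2 * z) = 2 * z.
  move=> z; apply/eqP; rewrite -subr_eq0; apply/eqP.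
  transitivity (- (4 * z)); first by move: z; clear; move=> z; ring.
  by rewrite four0 mul0r oppr0.
by rewrite -h4; apply: (addIr (2 * bz x x)); rewrite -h addNr.
Qed.


Lemma cross (x y : 'rV['F_2]_m) :
  (y *m Q *m x^T) ord0 ord0 = (x *m Q *m y^T) ord0 ord0.
Proof.
transitivity ((y *m Q *m x^T)^T ord0 ord0); first by rewrite [RHS]mxE.
by rewrite !trmx_mul trmxK Qs mulmxA.
Qed.


Definition gq (x : 'rV['F_2]_m) : 'F_2 :=
  (x *m Q *m x^T) ord0 ord0 + (x *m (diagv Q)^T) ord0 ord0.

Lemma gqD x y : gq (x + y) = gq x + gq y.
Proof.
rewrite /gq !(mulmxDl, mulmxDr, linearD) /= !ent_add (cross x y).
set A := (x *m Q *m x^T) _ _; set B := (x *m Q *m y^T) _ _.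
set C := (y *m Q *m y^T) _ _.
set D := (x *m _) _ _; set F := (y *m _) _ _.
have -> : A + B + (B + C) + (D + F) = A + D + (C + F) + (B + B).
  by move: A B C D F; clear; move=> *; ring.
by rewrite aa addr0.
Qed.

Lemma gq0 : gq 0 = 0.
Proof. by rewrite /gq !mul0mx !mxE addr0. Qed.

Lemma diagE (x : 'rV['F_2]_m) : (x *m Q *m x^T) ord0 ord0 = (x *m (diagv Q)^T) ord0 ord0.
Proof.
have : gq x = 0.
  rewrite (row_sum_delta x) (big_morph gq gqD gq0) big1 // => j _.
  case: (F2cases (x ord0 j)) => ->; first by rewrite scale0r gq0.
  rewrite scale1r /gq -rowE trmx_delta -colE !mxE.
  rewrite (bigD1 j) //= big1 ?addr0; last first.
    by move=> k /negbTE kj; rewrite !mxE kj andbF mul0r.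
  by rewrite !mxE !eqxx mul1r aa.
rewrite /gq => /eqP; rewrite addr_eq0 => /eqP ->.
by case: (F2cases ((x *m (diagv Q)^T) ord0 ord0)) => ->; apply/val_inj.
Qed.


Lemma diag_in_row : exists z : 'rV['F_2]_m, z *m Q = diagv Q.
Proof.
have : (diagv Q <= Q)%MS.
  rewrite submxE; apply/eqP/matrixP => i j; rewrite [i]ord1 [RHS]mxE.
  pose v := (col j (cokermx Q))^T.
  have hv : v *m Q = 0.
    by rewrite /v -[X in _ *m X]Qs -trmx_mul colE mulmxA mulmx_coker mul0mx trmx0.
  transitivity ((v *m (diagv Q)^T) ord0 ord0).
    rewrite !mxE; apply: eq_bigr => k _; by rewrite !mxE mulrC.
  by rewrite -diagE hv !mul0mx mxE.
by case/submxP => z ->; exists z.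
Qed.

End Forms.
Arguments diag_in_row {m Q} Qs.
Arguments iexpD {m Q} Qs b x y.
Arguments iexp2 {m Q} Qs b x.
Arguments diagE {m Q} Qs x.
Arguments cross {m Q} Qs x y.


Lemma negF2 m n (M : 'M['F_2]_(m, n)) : - M = M.
Proof.
apply/matrixP => i j; rewrite !mxE.
by case: (F2cases (M i j)) => ->; apply/val_inj.
Qed.

Theorem propositionA2 (m r : nat) (Q : 'M['F_2]_m) (b : 'rV['F_2]_m) :
  Q^T = Q -> \rank Q = r ->
  exists z1 : 'rV['F_2]_m,
    z1 *m Q = diagv Q /\
    (Ssum Q b = 0 \/
     (Ssum Q b) ^+ 2 = iexp Q b z1 * 2%:R ^+ (2 * m - r)%N).
Proof.
move=> Qs rk.
have [z1 hz1] := diag_in_row Qs.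
exists z1; split => //.
set d := diagv Q.
have S2 : Ssum Q b ^+ 2 = (2 ^ m)%:R * \sum_(u | u *m Q == d) iexp Q b u.
  rewrite expr2 /Ssum mulr_suml.
  transitivity (\sum_(x : 'rV['F_2]_m) \sum_(u : 'rV['F_2]_m)
       iexp Q b u * sg ((x *m (d + u *m Q)^T) ord0 ord0)).
    apply: eq_bigr => x _; rewrite mulr_sumr (reindex_inj (addrI x)) /=.
    apply: eq_bigr => u _.
    rewrite (iexpD Qs) !mulrA (iexp2 Qs) linearD mulmxDr ent_add sgD (diagE Qs).
    have -> : (x *m (u *m Q)^T) ord0 ord0 = (x *m Q *m u^T) ord0 ord0.
      by rewrite trmx_mul Qs mulmxA.
    by rewrite [sg _ * iexp _ _ _]mulrC -mulrA.
  rewrite exchange_big /=.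
  rewrite (eq_bigr (fun u => iexp Q b u * (if d + u *m Q == 0 then (2^m)%:R else 0))); last by move=> u _; rewrite -mulr_sumr fullsum.
  rewrite mulr_sumr [RHS]big_mkcond /=.
  apply: eq_bigr => u _.
  have -> : (d + u *m Q == 0) = (u *m Q == d) by rewrite addr_eq0 negF2 eq_sym.
  by case: ifP => _; rewrite ?mulr0 // mulrC.
have K : \sum_(u | u *m Q == d) iexp Q b u
         = iexp Q b z1 * \sum_(k | k *m Q == 0) iexp Q b k.
  rewrite mulr_sumr (reindex_inj (addrI z1)) /=.
  apply: eq_big => k.
    by rewrite mulmxDl hz1 -/d -{2}[d]addr0 (inj_eq (addrI d)).
  move=> hk; have kQ : k *m Q = 0.
    by move: hk; rewrite mulmxDl hz1 -/d -{2}[d]addr0 (inj_eq (addrI d)) => /eqP.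
  rewrite (iexpD Qs) (cross Qs k z1) kQ mul0mx mxE sg0 mulr1.
  by [].
have := @charsum m (fun k => k *m Q == 0) (iexp Q b).
case.
- by move=> x y /eqP hx /eqP hy; rewrite mulmxDl hx hy addr0.
- move=> x y /eqP hx _; rewrite (iexpD Qs) hx !mul0mx mxE sg0 mulr1 //.
- move=> h0; left.
  have : Ssum Q b ^+ 2 == 0 by rewrite S2 K h0 !mulr0.
  by rewrite expf_eq0 /= => /eqP.
- move=> h1; right; rewrite S2 K.
  under eq_bigr => k hk do rewrite h1 //.
  rewrite sumr_const card_ker rk.
  have hr : (r <= m)%N by rewrite -rk rank_leq_row.
  rewrite mulrCA -natrM -expnD -natrX.
  by rewrite mul2n -addnn addnBA.
Qed.
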